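(* Let $k\ge 0$ and let $G=F_k$, of order $n=4k+3$. Then (a) $\gamma_t(G)=(n+1)/2$. Moreover, if $k\ge 1$ and $w\in\{v_1,v_2,v_3\}$ (the three subdivision vertices on the path $a_1v_1v_2v_3c_1$), then (b) $\gamma_t(G-w)=(n-1)/2$ and (c) $\gamma_t^a(G;w)=(n-1)/2$.
   Context: For a graph $G$ with no isolated vertex, a total dominating set (TD-set) is a set $S\subseteq V(G)$ such that every vertex of $G$ is adjacent to some vertex of $S$; $\gamma_t(G)$ is the minimum cardinality of a TD-set. For a vertex $v$ of $G$, an almost total dominating set (ATD-set) of $G$ with respect to $v$ is a set $S\subseteq V(G)$ with $v\in S$ such that every vertex different from $v$ is adjacent to a vertex of $S$ and $v$ has no neighbor in $S$; $\gamma_t^a(G;v)$ is its minimum cardinality. For $k\ge 1$, $G_k$ is the graph with vertex set $\{a_i,b_i,c_i,d_i:1\le i\le k\}$ whose edges are: the edges of the path $a_1b_1a_2b_2\cdots a_kb_k$, the edges of the path $c_1d_1c_2d_2\cdots c_kd_k$, the edges $a_id_i$ and $b_ic_i$ for every $1\le i\le k$, and the two edges $a_1c_1$ and $b_kd_k$. $F_0=C_3$, and for $k\ge1$, $F_k$ is obtained from $G_k$ by replacing the edge $a_1c_1$ by a path $a_1v_1v_2v_3c_1$ through three new vertices $v_1,v_2,v_3$. *)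

(* Defs.v *)
From mathcomp Require Import all_boot.
Set Implicit Arguments. Unset Strict Implicit. Unset Printing Implicit Defensive.

Section Dom.
Variables (T : finType) (e : rel T).

(* S is a total dominating set of the subgraph induced by D:
   S is contained in D and every vertex of D has a neighbour in S. *)
Definition is_TD (D S : {set T}) : bool :=
  (S \subset D) && [forall x in D, [exists y in S, e x y]].

(* gamma_t of the subgraph induced by D (minimum size of a TD-set;
   the default #|D| is only reached if no TD-set exists). *)
Definition gamma_t_on (D : {set T}) : nat :=
  \big[minn/#|D|]_(S : {set T} | is_TD D S) #|S|.

Definition gamma_t : nat := gamma_t_on setT.

Definition is_ATD (v : T) (S : {set T}) : bool :=
  [&& v \in S,
      [forall x, (x != v) ==> [exists y in S, e x y]] &
      [forall y in S, ~~ e v y]].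

Definition gamma_ta (v : T) : nat :=
  \big[minn/#|T|]_(S : {set T} | is_ATD v S) #|S|.
End Dom.

(* ---------- The graphs F_k on vertex set 'I_(4k+3) ----------
   Labelling (indices i = 0..k-1 correspond to the paper's 1..k):
   a_i = 4i, b_i = 4i+1, c_i = 4i+2, d_i = 4i+3,
   v1 = 4k, v2 = 4k+1, v3 = 4k+2.  For k = 0 the vertices 0,1,2 form C_3. *)
Definition va (i : nat) := 4 * i.
Definition vb (i : nat) := 4 * i + 1.
Definition vc (i : nat) := 4 * i + 2.
Definition vd (i : nat) := 4 * i + 3.
Definition vv1 (k : nat) := 4 * k.
Definition vv2 (k : nat) := 4 * k + 1.
Definition vv3 (k : nat) := 4 * k + 2.

Definition Fk_dedge (k x y : nat) : bool :=
  if k == 0 then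
    [|| (x == 0) && (y == 1), (x == 1) && (y == 2) | (x == 2) && (y == 0)]
  else
    [|| [exists i : 'I_k, (x == va i) && (y == vb i)],
        [exists i : 'I_k, (i.+1 < k) && (x == vb i) && (y == va i.+1)],
        [exists i : 'I_k, (x == vc i) && (y == vd i)],
        [exists i : 'I_k, (i.+1 < k) && (x == vd i) && (y == vc i.+1)],
        [exists i : 'I_k, (x == va i) && (y == vd i)],
        [exists i : 'I_k, (x == vb i) && (y == vc i)],
        (x == vb k.-1) && (y == vd k.-1),
        (x == va 0) && (y == vv1 k),
        (x == vv1 k) && (y == vv2 k),
        (x == vv2 k) && (y == vv3 k)
      | (x == vv3 k) && (y == vc 0)].

Definition Fk (k : nat) : rel 'I_(4 * k + 3) :=
  fun x y => Fk_dedge k x y || Fk_dedge k y x.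
Arguments Fk k : clear implicits.

(* Main.v *)
Require Import Defs.
From mathcomp Require Import all_boot.
From mathcomp Require Import zify.
Set Implicit Arguments. Unset Strict Implicit. Unset Printing Implicit Defensive.

Definition adjn k x y := Fk_dedge k x y || Fk_dedge k y x.

Lemma adjnC k x y : adjn k x y = adjn k y x.
Proof. by rewrite /adjn orbC. Qed.

Ltac destr := repeat match goal with
 | H : is_true (_ || _) |- _ => case/orP: H => H
 | H : is_true (_ && _) |- _ => let H1 := fresh "H" in case/andP: H => H1 H
 | H : is_true [exists _, _] |- _ =>
     let j := fresh "j" in let Hj := fresh "Hj" in
     case/existsP: H => j H; have Hj := ltn_ord j
 | H : is_true (_ == _) |- _ => move/eqP: H => H
 end.


Lemma nA k i y : i < k -> adjn k (4*i) y ->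
  y = 4*i+1 \/ y = 4*i+3 \/ (i = 0 /\ y = 4*k) \/ (0 < i /\ y+3 = 4*i).
Proof.
case: k => // k Hi; rewrite /adjn /Fk_dedge /= /va /vb /vc /vd /vv1 /vv2 /vv3 => H.
Time (destr; lia).
Qed.

Lemma nB k i y : i < k -> adjn k (4*i+1) y ->
  y = 4*i \/ y = 4*i+2 \/ (i.+1 < k /\ y = 4*i+4) \/ (i.+1 = k /\ y = 4*i+3).
Proof.
case: k => // k Hi; rewrite /adjn /Fk_dedge /= /va /vb /vc /vd /vv1 /vv2 /vv3 => H.
destr; lia.
Qed.

Lemma nC k i y : i < k -> adjn k (4*i+2) y ->
  y = 4*i+1 \/ y = 4*i+3 \/ (i = 0 /\ y = 4*k+2) \/ (0 < i /\ y+1 = 4*i).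
Proof.
case: k => // k Hi; rewrite /adjn /Fk_dedge /= /va /vb /vc /vd /vv1 /vv2 /vv3 => H.
destr; lia.
Qed.

Lemma nD k i y : i < k -> adjn k (4*i+3) y ->
  y = 4*i+2 \/ y = 4*i \/ (i.+1 < k /\ y = 4*i+6) \/ (i.+1 = k /\ y = 4*i+1).
Proof.
case: k => // k Hi; rewrite /adjn /Fk_dedge /= /va /vb /vc /vd /vv1 /vv2 /vv3 => H.
destr; lia.
Qed.

Lemma nV1 k y : 0 < k -> adjn k (4*k) y -> y = 0 \/ y = 4*k+1.
Proof.
case: k => // k Hi; rewrite /adjn /Fk_dedge /= /va /vb /vc /vd /vv1 /vv2 /vv3 => H.
destr; lia.
Qed.

Lemma nV2 k y : 0 < k -> adjn k (4*k+1) y -> y = 4*k \/ y = 4*k+2.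
Proof.
case: k => // k Hi; rewrite /adjn /Fk_dedge /= /va /vb /vc /vd /vv1 /vv2 /vv3 => H.
destr; lia.
Qed.

Lemma nV3 k y : 0 < k -> adjn k (4*k+2) y -> y = 4*k+1 \/ y = 2.
Proof.
case: k => // k Hi; rewrite /adjn /Fk_dedge /= /va /vb /vc /vd /vv1 /vv2 /vv3 => H.
destr; lia.
Qed.

Ltac pick n := match n with
 | 0 => try (apply/orP; left)
 | S ?m => apply/orP; right; pick m end.
Ltac fin := rewrite /va /vb /vc /vd /vv1 /vv2 /vv3 /=; rewrite ?eqxx ?andbT //=;
  try (apply/andP; split); try (apply/eqP; lia).

Lemma e_ab k i : i < k -> adjn k (4*i) (4*i+1).
Proof.
case: k => // k Hi. rewrite /adjn /Fk_dedge (_ : (k.+1 == 0) = false) //; cbv beta iota; apply/orP; left; pick 0.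
apply/existsP; exists (Ordinal Hi); fin.
Qed.
Lemma e_ba k i : i.+1 < k -> adjn k (4*i+1) (4*i+4).
Proof.
case: k => // k Hi. have Hi' : i < k.+1 by lia.
rewrite /adjn /Fk_dedge (_ : (k.+1 == 0) = false) //; cbv beta iota; apply/orP; left; pick 1.
apply/existsP; exists (Ordinal Hi'); rewrite /= Hi /=; fin.
Qed.
Lemma e_cd k i : i < k -> adjn k (4*i+2) (4*i+3).
Proof.
case: k => // k Hi. rewrite /adjn /Fk_dedge (_ : (k.+1 == 0) = false) //; cbv beta iota; apply/orP; left; pick 2.
apply/existsP; exists (Ordinal Hi); fin.
Qed.
Lemma e_dc k i : i.+1 < k -> adjn k (4*i+3) (4*i+6).
Proof.
case: k => // k Hi. have Hi' : i < k.+1 by lia.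
rewrite /adjn /Fk_dedge (_ : (k.+1 == 0) = false) //; cbv beta iota; apply/orP; left; pick 3.
apply/existsP; exists (Ordinal Hi'); rewrite /= Hi /=; fin.
Qed.
Lemma e_ad k i : i < k -> adjn k (4*i) (4*i+3).
Proof.
case: k => // k Hi. rewrite /adjn /Fk_dedge (_ : (k.+1 == 0) = false) //; cbv beta iota; apply/orP; left; pick 4.
apply/existsP; exists (Ordinal Hi); fin.
Qed.
Lemma e_bc k i : i < k -> adjn k (4*i+1) (4*i+2).
Proof.
case: k => // k Hi. rewrite /adjn /Fk_dedge (_ : (k.+1 == 0) = false) //; cbv beta iota; apply/orP; left; pick 5.
apply/existsP; exists (Ordinal Hi); fin.
Qed.
Lemma e_bd k i : i.+1 = k -> adjn k (4*i+1) (4*i+3).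
Proof.
move=> <-. rewrite /adjn /Fk_dedge (_ : (i.+1 == 0) = false) //; cbv beta iota; apply/orP; left; pick 6. fin.
Qed.
Lemma e_av k : 0 < k -> adjn k 0 (4*k).
Proof.
case: k => // k _. rewrite /adjn /Fk_dedge (_ : (k.+1 == 0) = false) //; cbv beta iota; apply/orP; left; pick 7. fin.
Qed.
Lemma e_v12 k : 0 < k -> adjn k (4*k) (4*k+1).
Proof.
case: k => // k _. rewrite /adjn /Fk_dedge (_ : (k.+1 == 0) = false) //; cbv beta iota; apply/orP; left; pick 8. fin.
Qed.
Lemma e_v23 k : 0 < k -> adjn k (4*k+1) (4*k+2).
Proof.
case: k => // k _. rewrite /adjn /Fk_dedge (_ : (k.+1 == 0) = false) //; cbv beta iota; apply/orP; left; pick 9. fin.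
Qed.
Lemma e_vc k : 0 < k -> adjn k (4*k+2) 2.
Proof.
case: k => // k _. rewrite /adjn /Fk_dedge (_ : (k.+1 == 0) = false) //; cbv beta iota; apply/orP; left; pick 10. fin.
Qed.


Lemma bigmin_lb (I : finType) (P : pred I) (F : I -> nat) d b :
  b <= d -> (forall i, P i -> b <= F i) -> b <= \big[minn/d]_(i | P i) F i.
Proof.
move=> hd hF; elim/big_ind: _ => // x y hx hy; by rewrite leq_min hx hy.
Qed.

Lemma bigmin_ub (I : finType) (P : pred I) (F : I -> nat) d i0 :
  P i0 -> \big[minn/d]_(i | P i) F i <= F i0.
Proof.
move=> Hi; have : i0 \in index_enum I by rewrite mem_index_enum.
elim: (index_enum I) => [//|x r IH]; rewrite inE big_cons.
case: eqP => [<- _|_ /IH H]; first by rewrite Hi geq_minl.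
case: (P x) => //; exact: leq_trans (geq_minr _ _) H.
Qed.

Lemma sum4 (f : nat -> nat) k :
  \sum_(0 <= m < 4*k) f m = \sum_(0 <= i < k) (f (4*i) + f (4*i+1) + f (4*i+2) + f (4*i+3)).
Proof.
elim: k => [|k IH]; first by rewrite !big_geq.
rewrite [in RHS]big_nat_recr //= -IH.
rewrite (_ : 4*k.+1 = (4*k+3).+1); last by lia.
rewrite big_nat_recr; last by lia.
rewrite (_ : 4*k+3 = (4*k+2).+1); last by lia.
rewrite big_nat_recr; last by lia.
rewrite (_ : 4*k+2 = (4*k+1).+1); last by lia.
rewrite big_nat_recr; last by lia.
rewrite (_ : 4*k+1 = (4*k).+1); last by lia.
rewrite big_nat_recr; last by lia.
by rewrite !addnA.
Qed.

Lemma sumn3 (f : nat -> nat) k :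
  \sum_(0 <= m < 4*k+3) f m = \sum_(0 <= m < 4*k) f m + (f (4*k) + f (4*k+1) + f (4*k+2)).
Proof.
rewrite (_ : 4*k+3 = (4*k+2).+1); last by lia.
rewrite big_nat_recr; last by lia.
rewrite (_ : 4*k+2 = (4*k+1).+1); last by lia.
rewrite big_nat_recr; last by lia.
rewrite (_ : 4*k+1 = (4*k).+1); last by lia.
rewrite big_nat_recr; last by lia.
by rewrite !addnA.
Qed.

Section Count.
Variable k : nat.
Variable S : {set 'I_(4*k+3)}.
Definition xb (m : nat) : bool := [exists y in S, val y == m].

Lemma xbT (y : 'I_(4*k+3)) : y \in S -> xb (val y).
Proof. move=> yS; apply/existsP; exists y; by rewrite yS eqxx. Qed.

Lemma xbE (y : 'I_(4*k+3)) : xb (val y) = (y \in S).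
Proof.
apply/idP/idP; last exact: xbT.
by case/existsP => z /andP [zS /eqP /val_inj <-].
Qed.

Lemma card_sum : #|S| = \sum_(0 <= m < 4*k+3) xb m.
Proof.
rewrite big_mkord -sum1_card big_mkcond /=; apply: eq_bigr => y _.
by rewrite xbE; case: (y \in S).
Qed.

Lemma card_blocks : #|S| = \sum_(0 <= i < k)
   (xb (4*i) + xb (4*i+1) + xb (4*i+2) + xb (4*i+3)) + (xb (4*k) + xb (4*k+1) + xb (4*k+2)).
Proof. by rewrite card_sum sumn3 (sum4 (fun m => nat_of_bool (xb m))). Qed.
End Count.


Lemma loc_mid (Bp Dp a b c d A C : bool) :
  [|| Bp, b | d] -> [|| Dp, b | d] -> [|| a, c | A] -> [|| a, c | C] ->
  2 + (1 + (b && d) - (A && C)) <= a + b + c + d + (1 + (Bp && Dp) - (a && c)).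
Proof. by case: Bp; case: Dp; case: a; case: b; case: c; case: d; case: A; case: C. Qed.

Lemma loc_end (Bp Dp a b c d : bool) :
  [|| Bp, b | d] -> [|| Dp, b | d] -> [|| a, c | d] -> [|| a, c | b] ->
  3 <= a + b + c + d + (1 + (Bp && Dp) - (a && c)).
Proof. by case: Bp; case: Dp; case: a; case: b; case: c; case: d. Qed.

Section Lower.
Variable k : nat.
Variable S : {set 'I_(4*k+3)}.
Hypothesis hk : 0 < k.
Hypothesis HD : forall u : 'I_(4*k+3), val u < 4*k -> [exists y in S, Fk k u y].

Local Notation x := (xb S).

Lemma getnb m : m < 4*k -> exists y : 'I_(4*k+3), x (val y) /\ adjn k m (val y).
Proof.
move=> Hm; have Hm' : m < 4*k+3 by lia.
case/existsP: (@HD (Ordinal Hm') Hm) => y /andP [yS Hy].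
by exists y; split; [exact: xbT | exact: Hy].
Qed.

Definition Bm i := if i == 0 then x (4*k) else x (4*i-3).
Definition Dm i := if i == 0 then x (4*k+2) else x (4*i-1).
Definition psi i := 1 + (Bm i && Dm i) - (x (4*i) && x (4*i+2)).
Definition blk i : nat := x (4*i) + x (4*i+1) + x (4*i+2) + x (4*i+3).

Lemma domA i : i < k -> [|| Bm i, x (4*i+1) | x (4*i+3)].
Proof.
move=> Hi; have [|y [Hy Ha]] := getnb (m := 4*i); first lia.
case: (nA Hi Ha) => [E|[E|[[E1 E]|[E1 E]]]].
- by rewrite -E Hy orbT.
- by rewrite -E Hy !orbT.
- by rewrite /Bm E1 eqxx -E Hy.
- rewrite /Bm (_ : (i == 0) = false); last by apply/eqP; lia.
  by rewrite (_ : 4*i-3 = val y) ?Hy //; lia.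
Qed.

Lemma domC i : i < k -> [|| Dm i, x (4*i+1) | x (4*i+3)].
Proof.
move=> Hi; have [|y [Hy Ha]] := getnb (m := 4*i+2); first lia.
case: (nC Hi Ha) => [E|[E|[[E1 E]|[E1 E]]]].
- by rewrite -E Hy orbT.
- by rewrite -E Hy !orbT.
- by rewrite /Dm E1 eqxx -E Hy.
- rewrite /Dm (_ : (i == 0) = false); last by apply/eqP; lia.
  by rewrite (_ : 4*i-1 = val y) ?Hy //; lia.
Qed.

Lemma domB i : i < k ->
  [|| x (4*i), x (4*i+2) | if i.+1 == k then x (4*i+3) else x (4*i+4)].
Proof.
move=> Hi; have [|y [Hy Ha]] := getnb (m := 4*i+1); first lia.
case: (nB Hi Ha) => [E|[E|[[E1 E]|[E1 E]]]].
- by rewrite -E Hy.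
- by rewrite -E Hy orbT.
- rewrite (_ : (i.+1 == k) = false); last by apply/eqP; lia.
  by rewrite -E Hy !orbT.
- by rewrite E1 eqxx -E Hy !orbT.
Qed.

Lemma domD i : i < k ->
  [|| x (4*i+2), x (4*i) | if i.+1 == k then x (4*i+1) else x (4*i+6)].
Proof.
move=> Hi; have [|y [Hy Ha]] := getnb (m := 4*i+3); first lia.
case: (nD Hi Ha) => [E|[E|[[E1 E]|[E1 E]]]].
- by rewrite -E Hy.
- by rewrite -E Hy orbT.
- rewrite (_ : (i.+1 == k) = false); last by apply/eqP; lia.
  by rewrite -E Hy !orbT.
- by rewrite E1 eqxx -E Hy !orbT.
Qed.

Lemma mid i : i.+1 < k -> 2 + psi i.+1 <= blk i + psi i.
Proof.
move=> Hi; have Hi' : i < k by lia.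
have hA := domA Hi'; have hC := domC Hi'; have hB := domB Hi'; have hD := domD Hi'.
rewrite (_ : (i.+1 == k) = false) in hB hD; last by apply/eqP; lia.
rewrite /psi /blk.
have -> : Bm i.+1 = x (4*i+1) by rewrite /Bm /=; congr (x _); lia.
have -> : Dm i.+1 = x (4*i+3) by rewrite /Dm /=; congr (x _); lia.
rewrite /psi /blk.
rewrite (_ : 4*i.+1 = 4*i+4); last by lia.
rewrite (_ : 4*i+4+2 = 4*i+6); last by lia.
rewrite orbCA in hD.
exact: loc_mid hA hC hB hD.
Qed.

Lemma endb i : i.+1 = k -> 3 <= blk i + psi i.
Proof.
move=> Hi; have Hi' : i < k by lia.
have hA := domA Hi'; have hC := domC Hi'; have hB := domB Hi'; have hD := domD Hi'.
rewrite Hi eqxx in hB hD; rewrite orbCA in hD.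
rewrite /psi /blk.
exact: loc_end hA hC hB hD.
Qed.

Lemma blocks_lb : 2*k+1 <= \sum_(0 <= i < k) blk i + psi 0.
Proof.
suff H : forall d, d < k -> 2*d+3 <= \sum_(k - d.+1 <= i < k) blk i + psi (k - d.+1).
  have Hk1 : k.-1 < k by lia.
  have := H k.-1 Hk1; rewrite (_ : k - k.-1.+1 = 0); last by lia.
  lia.
elim=> [|d IH] Hd.
- rewrite big_ltn; last by lia.
  rewrite big_geq; last by lia.
  have Hk1 : (k - 1).+1 = k by lia.
  have := endb Hk1; lia.
- rewrite big_ltn; last by lia.
  have E : (k - d.+2).+1 = k - d.+1 by lia.
  have Hd1 : d < k by lia.
  have Hd2 : (k - d.+2).+1 < k by lia.
  rewrite E; have := IH Hd1; have := mid Hd2.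
  rewrite E; lia.
Qed.

End Lower.


Lemma total_lb k (S : {set 'I_(4*k+3)}) t : 0 < k ->
  (forall u : 'I_(4*k+3), val u < 4*k -> [exists y in S, Fk k u y]) ->
  t + (1 + (xb S (4*k) && xb S (4*k+2)) - (xb S 0 && xb S 2))
     <= xb S (4*k) + xb S (4*k+1) + xb S (4*k+2) + 1 ->
  2*k + t <= #|S|.
Proof.
move=> hk HD HV; have := blocks_lb hk HD.
rewrite /psi /Bm /Dm /blk /= card_blocks muln0 add0n. move: HV. lia.
Qed.

Lemma getnb' k (S : {set 'I_(4*k+3)}) (u : 'I_(4*k+3)) :
  [exists y in S, Fk k u y] -> exists y : 'I_(4*k+3), xb S (val y) /\ adjn k (val u) (val y).
Proof. case/existsP => y /andP [yS Hy]; exists y; split; [exact: xbT | exact: Hy]. Qed.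

Section VDom.
Variable k : nat.
Variable S : {set 'I_(4*k+3)}.
Hypothesis hk : 0 < k.
Variable u : 'I_(4*k+3).
Hypothesis Hu : [exists y in S, Fk k u y].

Lemma domV1 : val u = 4*k -> xb S 0 || xb S (4*k+1).
Proof.
move=> E; have [y [Hy Ha]] := getnb' Hu; rewrite E in Ha.
by case: (nV1 hk Ha) => <-; rewrite Hy ?orbT.
Qed.
Lemma domV2 : val u = 4*k+1 -> xb S (4*k) || xb S (4*k+2).
Proof.
move=> E; have [y [Hy Ha]] := getnb' Hu; rewrite E in Ha.
by case: (nV2 hk Ha) => <-; rewrite Hy ?orbT.
Qed.
Lemma domV3 : val u = 4*k+2 -> xb S (4*k+1) || xb S 2.
Proof.
move=> E; have [y [Hy Ha]] := getnb' Hu; rewrite E in Ha.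
by case: (nV3 hk Ha) => <-; rewrite Hy ?orbT.
Qed.
End VDom.

Lemma xbF k (S : {set 'I_(4*k+3)}) m : xb S m -> m < 4*k+3.
Proof. case/existsP => y /andP [_ /eqP <-]; exact: ltn_ord. Qed.

Lemma xb_set k (p : nat -> bool) m : m < 4*k+3 ->
  xb [set u : 'I_(4*k+3) | p (val u)] m = p m.
Proof.
move=> Hm; have -> : m = val (Ordinal Hm) by [].
by rewrite xbE inE.
Qed.

Lemma card_p k (p : nat -> bool) :
  #|[set u : 'I_(4*k+3) | p (val u)]| =
  \sum_(0 <= i < k) (p (4*i) + p (4*i+1) + p (4*i+2) + p (4*i+3))
   + (p (4*k) + p (4*k+1) + p (4*k+2)).
Proof.
rewrite card_blocks !xb_set; try lia.
congr (_ + _); apply: eq_big_nat => i /andP [_ Hi].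
rewrite !xb_set //; lia.
Qed.

Lemma sum_const2 k (f : nat -> nat) : (forall i, i < k -> f i = 2) ->
  \sum_(0 <= i < k) f i = 2 * k.
Proof.
move=> H; rewrite (eq_big_nat _ _ (F2 := fun _ => 2)); last first.
  by move=> i /andP [_ Hi]; exact: H.
rewrite sum_nat_const_nat; lia.
Qed.

Lemma mkdom k (p : nat -> bool) (u : 'I_(4*k+3)) m :
  m < 4*k+3 -> p m -> adjn k (nat_of_ord u) m ->
  [exists y in [set z : 'I_(4*k+3) | p (val z)], Fk k u y].
Proof.
move=> Hm Hp Ha; apply/existsP; exists (Ordinal Hm); by rewrite inE Hp.
Qed.

Lemma classify k m : m < 4*k+3 ->
  (exists i, i < k /\ (m = 4*i \/ m = 4*i+1 \/ m = 4*i+2 \/ m = 4*i+3))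
  \/ m = 4*k \/ m = 4*k+1 \/ m = 4*k+2.
Proof.
move=> Hm; case: (ltnP m (4*k)) => H.
  left; exists (m %/ 4); lia.
right; lia.
Qed.

Definition pAB k m := (m < 4*k) && (m %% 4 < 2).
Definition pBC k m :=
  (m < 4*k) && (((m < 4) && ((m == 1) || (m == 2))) || ((4 <= m) && (m %% 4 < 2))).


Lemma blockdom_AB k (p : nat -> bool) (u : 'I_(4*k+3)) i :
  (forall m, pAB k m -> p m) -> i < k ->
  (nat_of_ord u = 4*i \/ nat_of_ord u = 4*i+1 \/ nat_of_ord u = 4*i+2 \/ nat_of_ord u = 4*i+3) ->
  [exists y in [set z : 'I_(4*k+3) | p (val z)], Fk k u y].
Proof.
move=> Hp Hi [E|[E|[E|E]]].
- apply: (mkdom (m := 4*i+1)); [lia | apply: Hp; rewrite /pAB; lia | rewrite E; exact: e_ab].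
- apply: (mkdom (m := 4*i)); [lia | apply: Hp; rewrite /pAB; lia | rewrite E adjnC; exact: e_ab].
- apply: (mkdom (m := 4*i+1)); [lia | apply: Hp; rewrite /pAB; lia | rewrite E adjnC; exact: e_bc].
- apply: (mkdom (m := 4*i)); [lia | apply: Hp; rewrite /pAB; lia | rewrite E adjnC; exact: e_ad].
Qed.

Lemma blockdom_BC k (p : nat -> bool) (u : 'I_(4*k+3)) i :
  (forall m, pBC k m -> p m) -> i < k ->
  (nat_of_ord u = 4*i \/ nat_of_ord u = 4*i+1 \/ nat_of_ord u = 4*i+2 \/ nat_of_ord u = 4*i+3) ->
  [exists y in [set z : 'I_(4*k+3) | p (val z)], Fk k u y].
Proof.
move=> Hp Hi [E|[E|[E|E]]].
- apply: (mkdom (m := 4*i+1)); [lia | apply: Hp; rewrite /pBC; lia | rewrite E; exact: e_ab].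
- case: (posnP i) => Hi0.
  + apply: (mkdom (m := 4*i+2)); [lia | apply: Hp; rewrite /pBC; lia | rewrite E; exact: e_bc].
  + apply: (mkdom (m := 4*i)); [lia | apply: Hp; rewrite /pBC; lia | rewrite E adjnC; exact: e_ab].
- apply: (mkdom (m := 4*i+1)); [lia | apply: Hp; rewrite /pBC; lia | rewrite E adjnC; exact: e_bc].
- case: (posnP i) => Hi0.
  + apply: (mkdom (m := 4*i+2)); [lia | apply: Hp; rewrite /pBC; lia | rewrite E adjnC; exact: e_cd].
  + apply: (mkdom (m := 4*i)); [lia | apply: Hp; rewrite /pBC; lia | rewrite E adjnC; exact: e_ad].
Qed.

Lemma e_va k : 0 < k -> adjn k (4*k) 0.
Proof. by move=> hk; rewrite adjnC e_av. Qed.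

Lemma sum_const2' a b (f : nat -> nat) : (forall i, a <= i < b -> f i = 2) ->
  \sum_(a <= i < b) f i = 2 * (b - a).
Proof.
move=> H; rewrite (eq_big_nat _ _ (F2 := fun _ => 2)); last first.
  by move=> i Hi; exact: H.
rewrite sum_nat_const_nat; lia.
Qed.

Definition sa k m := pAB k m || (m == 4*k) || (m == 4*k+1).

Lemma TD_a k : 0 < k -> is_TD (Fk k) setT [set u : 'I_(4*k+3) | sa k (val u)].
Proof.
move=> hk; rewrite /is_TD subsetT /=; apply/forallP => u; apply/implyP => _.
have [[i [Hi H]]|[E|[E|E]]] := classify (ltn_ord u).
- by apply: blockdom_AB Hi H => m; rewrite /sa => ->.
- apply: (mkdom (m := 4*k+1)); [lia | rewrite /sa; lia | rewrite E; exact: e_v12].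
- apply: (mkdom (m := 4*k)); [lia | rewrite /sa; lia | rewrite E adjnC; exact: e_v12].
- apply: (mkdom (m := 4*k+1)); [lia | rewrite /sa; lia | rewrite E adjnC; exact: e_v23].
Qed.

Lemma card_a k : #|[set u : 'I_(4*k+3) | sa k (val u)]| = 2*k+2.
Proof.
rewrite card_p sum_const2; first by rewrite /sa /pAB; lia.
by move=> i Hi; rewrite /sa /pAB; lia.
Qed.

Definition sb1 k m := pBC k m || (m == 4*k+2).
Definition sb2 k m := pAB k m || (m == 2).
Definition sb3 k m := pAB k m || (m == 4*k).

Lemma card_b1 k : #|[set u : 'I_(4*k+3) | sb1 k (val u)]| = 2*k+1.
Proof.
rewrite card_p sum_const2; first by rewrite /sb1 /pBC; lia.
by move=> i Hi; rewrite /sb1 /pBC; lia.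
Qed.

Lemma card_b3 k : #|[set u : 'I_(4*k+3) | sb3 k (val u)]| = 2*k+1.
Proof.
rewrite card_p sum_const2; first by rewrite /sb3 /pAB; lia.
by move=> i Hi; rewrite /sb3 /pAB; lia.
Qed.

Lemma card_b2 k : 0 < k -> #|[set u : 'I_(4*k+3) | sb2 k (val u)]| = 2*k+1.
Proof.
move=> hk; rewrite card_p big_ltn //.
rewrite sum_const2'; first by rewrite /sb2 /pAB; lia.
by move=> i /andP [Hi1 Hi]; rewrite /sb2 /pAB; lia.
Qed.

Lemma card_c1 k : #|[set u : 'I_(4*k+3) | pBC k (val u) || (val u == 4*k)]| = 2*k+1.
Proof.
rewrite (@card_p k (fun m => pBC k m || (m == 4*k))) sum_const2; first by rewrite /pBC; lia.
by move=> i Hi; rewrite /pBC; lia.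
Qed.

Lemma card_c2 k : #|[set u : 'I_(4*k+3) | pAB k (val u) || (val u == 4*k+1)]| = 2*k+1.
Proof.
rewrite (@card_p k (fun m => pAB k m || (m == 4*k+1))) sum_const2; first by rewrite /pAB; lia.
by move=> i Hi; rewrite /pAB; lia.
Qed.

Lemma card_c3 k : #|[set u : 'I_(4*k+3) | pAB k (val u) || (val u == 4*k+2)]| = 2*k+1.
Proof.
rewrite (@card_p k (fun m => pAB k m || (m == 4*k+2))) sum_const2; first by rewrite /pAB; lia.
by move=> i Hi; rewrite /pAB; lia.
Qed.


Lemma xb_out k (S : {set 'I_(4*k+3)}) (w : 'I_(4*k+3)) :
  S \subset [set~ w] -> xb S (nat_of_ord w) = false.
Proof.
move=> /subsetP HS; rewrite /xb; apply/negbTE/negP => /existsP [y /andP [yS /eqP E]].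
have := HS y yS; rewrite !inE; apply/negP/negPn/eqP; exact: ord_inj.
Qed.

Lemma xb_nadj k (S : {set 'I_(4*k+3)}) (w : 'I_(4*k+3)) m :
  [forall y in S, ~~ Fk k w y] -> adjn k (nat_of_ord w) m -> xb S m = false.
Proof.
move=> /forallP H Ha; rewrite /xb; apply/negbTE/negP => /existsP [y /andP [yS /eqP E]].
have := H y; rewrite yS /= => /negP; apply; rewrite -E in Ha; exact: Ha.
Qed.

Lemma V_a (v1 v2 v3 a c : bool) : (a || v2) -> (v1 || v3) -> (v2 || c) ->
  2 + (1 + (v1 && v3) - (a && c)) <= v1 + v2 + v3 + 1.
Proof. by case: v1; case: v2; case: v3; case: a; case: c. Qed.
Lemma V_b1 (v1 v2 v3 a c : bool) : v1 = false -> (v1 || v3) -> (v2 || c) ->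
  1 + (1 + (v1 && v3) - (a && c)) <= v1 + v2 + v3 + 1.
Proof. by move=> ->; case: v2; case: v3; case: a; case: c. Qed.
Lemma V_b2 (v1 v2 v3 a c : bool) : v2 = false -> (a || v2) -> (v2 || c) ->
  1 + (1 + (v1 && v3) - (a && c)) <= v1 + v2 + v3 + 1.
Proof. by move=> ->; case: v1; case: v3; case: a; case: c. Qed.
Lemma V_b3 (v1 v2 v3 a c : bool) : v3 = false -> (a || v2) -> (v1 || v3) ->
  1 + (1 + (v1 && v3) - (a && c)) <= v1 + v2 + v3 + 1.
Proof. by move=> ->; case: v1; case: v2; case: a; case: c. Qed.
Lemma V_c1 (v1 v2 v3 a c : bool) : v1 = true -> a = false -> v2 = false -> (v2 || c) ->
  1 + (1 + (v1 && v3) - (a && c)) <= v1 + v2 + v3 + 1.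
Proof. by move=> -> -> ->; case: v3; case: c. Qed.
Lemma V_c2 (v1 v2 v3 a c : bool) : v2 = true -> v1 = false -> v3 = false ->
  1 + (1 + (v1 && v3) - (a && c)) <= v1 + v2 + v3 + 1.
Proof. by move=> -> -> ->; case: a; case: c. Qed.
Lemma V_c3 (v1 v2 v3 a c : bool) : v3 = true -> v2 = false -> c = false -> (a || v2) ->
  1 + (1 + (v1 && v3) - (a && c)) <= v1 + v2 + v3 + 1.
Proof. by move=> -> -> ->; case: v1; case: a. Qed.

Section Lbs.
Variable k : nat.
Hypothesis hk : 0 < k.
Let L1 : 4*k < 4*k+3. Proof. lia. Qed.
Let L2 : 4*k+1 < 4*k+3. Proof. lia. Qed.
Let L3 : 4*k+2 < 4*k+3. Proof. lia. Qed.
Let o1 : 'I_(4*k+3) := Ordinal L1.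
Let o2 : 'I_(4*k+3) := Ordinal L2.
Let o3 : 'I_(4*k+3) := Ordinal L3.

Lemma lb_a (S : {set 'I_(4*k+3)}) : is_TD (Fk k) setT S -> 2*k+2 <= #|S|.
Proof.
move=> /andP [_ /forallP H].
have Hall u : [exists y in S, Fk k u y] := implyP (H u) (in_setT u).
have h1 := domV1 hk (Hall o1) erefl.
have h2 := domV2 hk (Hall o2) erefl.
have h3 := domV3 hk (Hall o3) erefl.
apply: total_lb hk (fun u _ => Hall u) _; exact: V_a h1 h2 h3.
Qed.

Section W.
Variable w : 'I_(4*k+3).

Lemma HDw (S : {set 'I_(4*k+3)}) :
  4*k <= nat_of_ord w -> (forall u, u != w -> [exists y in S, Fk k u y]) ->
  forall u : 'I_(4*k+3), val u < 4*k -> [exists y in S, Fk k u y].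
Proof.
move=> Hw H u Hu; apply: H; apply/eqP => E.
have Hu' : nat_of_ord u < 4*k := Hu. rewrite E in Hu'; lia.
Qed.

Lemma domTD (S : {set 'I_(4*k+3)}) : is_TD (Fk k) [set~ w] S ->
  forall u, u != w -> [exists y in S, Fk k u y].
Proof.
move=> /andP [_ /forallP H] u Hu; apply: (implyP (H u)); by rewrite !inE.
Qed.

Lemma domATD (S : {set 'I_(4*k+3)}) : is_ATD (Fk k) w S ->
  forall u, u != w -> [exists y in S, Fk k u y].
Proof. by case/and3P => _ /forallP H _ u Hu; apply: (implyP (H u)). Qed.

Lemma neqw (u : 'I_(4*k+3)) : nat_of_ord u <> nat_of_ord w -> u != w.
Proof. by move=> H; apply/eqP => E; apply: H; rewrite E. Qed.

Lemma lb_b1 (S : {set 'I_(4*k+3)}) : nat_of_ord w = 4*k ->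
  is_TD (Fk k) [set~ w] S -> 2*k+1 <= #|S|.
Proof.
move=> Hw HT; have H := domTD HT.
have x1 : xb S (4*k) = false by rewrite -Hw; apply: xb_out; case/andP: HT.
have h2 := domV2 hk (H o2 (neqw (u := o2) ltac:(rewrite Hw /=; lia))) erefl.
have h3 := domV3 hk (H o3 (neqw (u := o3) ltac:(rewrite Hw /=; lia))) erefl.
apply: total_lb hk (HDw ltac:(lia) H) _; exact: V_b1 x1 h2 h3.
Qed.

Lemma lb_b2 (S : {set 'I_(4*k+3)}) : nat_of_ord w = 4*k+1 ->
  is_TD (Fk k) [set~ w] S -> 2*k+1 <= #|S|.
Proof.
move=> Hw HT; have H := domTD HT.
have x2 : xb S (4*k+1) = false by rewrite -Hw; apply: xb_out; case/andP: HT.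
have h1 := domV1 hk (H o1 (neqw (u := o1) ltac:(rewrite Hw /=; lia))) erefl.
have h3 := domV3 hk (H o3 (neqw (u := o3) ltac:(rewrite Hw /=; lia))) erefl.
apply: total_lb hk (HDw ltac:(lia) H) _; exact: V_b2 x2 h1 h3.
Qed.

Lemma lb_b3 (S : {set 'I_(4*k+3)}) : nat_of_ord w = 4*k+2 ->
  is_TD (Fk k) [set~ w] S -> 2*k+1 <= #|S|.
Proof.
move=> Hw HT; have H := domTD HT.
have x3 : xb S (4*k+2) = false by rewrite -Hw; apply: xb_out; case/andP: HT.
have h1 := domV1 hk (H o1 (neqw (u := o1) ltac:(rewrite Hw /=; lia))) erefl.
have h2 := domV2 hk (H o2 (neqw (u := o2) ltac:(rewrite Hw /=; lia))) erefl.
apply: total_lb hk (HDw ltac:(lia) H) _; exact: V_b3 x3 h1 h2.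
Qed.

Lemma lc_c1 (S : {set 'I_(4*k+3)}) : nat_of_ord w = 4*k ->
  is_ATD (Fk k) w S -> 2*k+1 <= #|S|.
Proof.
move=> Hw HT; have H := domATD HT.
case/and3P: HT => wS _ Hn.
have x1 : xb S (4*k) = true by rewrite -Hw; apply: xbT.
have xa : xb S 0 = false by apply: xb_nadj Hn _; rewrite Hw adjnC e_av.
have x2 : xb S (4*k+1) = false by apply: xb_nadj Hn _; rewrite Hw e_v12.
have h3 := domV3 hk (H o3 (neqw (u := o3) ltac:(rewrite Hw /=; lia))) erefl.
apply: total_lb hk (HDw ltac:(lia) H) _; exact: V_c1 x1 xa x2 h3.
Qed.

Lemma lc_c2 (S : {set 'I_(4*k+3)}) : nat_of_ord w = 4*k+1 ->
  is_ATD (Fk k) w S -> 2*k+1 <= #|S|.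
Proof.
move=> Hw HT; have H := domATD HT.
case/and3P: HT => wS _ Hn.
have x2 : xb S (4*k+1) = true by rewrite -Hw; apply: xbT.
have x1 : xb S (4*k) = false by apply: xb_nadj Hn _; rewrite Hw adjnC e_v12.
have x3 : xb S (4*k+2) = false by apply: xb_nadj Hn _; rewrite Hw e_v23.
apply: total_lb hk (HDw ltac:(lia) H) _; exact: V_c2 x2 x1 x3.
Qed.

Lemma lc_c3 (S : {set 'I_(4*k+3)}) : nat_of_ord w = 4*k+2 ->
  is_ATD (Fk k) w S -> 2*k+1 <= #|S|.
Proof.
move=> Hw HT; have H := domATD HT.
case/and3P: HT => wS _ Hn.
have x3 : xb S (4*k+2) = true by rewrite -Hw; apply: xbT.
have x2 : xb S (4*k+1) = false by apply: xb_nadj Hn _; rewrite Hw adjnC e_v23.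
have xc : xb S 2 = false by apply: xb_nadj Hn _; rewrite Hw e_vc.
have h1 := domV1 hk (H o1 (neqw (u := o1) ltac:(rewrite Hw /=; lia))) erefl.
apply: total_lb hk (HDw ltac:(lia) H) _; exact: V_c3 x3 x2 xc h1.
Qed.

End W.
End Lbs.


Section Ups.
Variable k : nat.
Hypothesis hk : 0 < k.
Variable w : 'I_(4*k+3).

Lemma eqw (u : 'I_(4*k+3)) m : nat_of_ord u = m -> nat_of_ord w = m -> u == w.
Proof. by move=> E1 E2; apply/eqP/ord_inj; rewrite E1 E2. Qed.

Lemma TD_b1 : nat_of_ord w = 4*k ->
  is_TD (Fk k) [set~ w] [set u : 'I_(4*k+3) | sb1 k (val u)].
Proof.
move=> Hw; apply/andP; split.
  apply/subsetP => y; rewrite !inE /= => Hy; apply/negP => /eqP E.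
  have Ey : nat_of_ord y = 4*k by rewrite E.
  move: Hy; rewrite /sb1 /pBC; lia.
apply/forallP => u; apply/implyP; rewrite !inE => Hu.
have [[i [Hi H]]|[E|[E|E]]] := classify (ltn_ord u).
- by apply: blockdom_BC Hi H => m; rewrite /sb1 => ->.
- by rewrite (eqw E Hw) in Hu.
- apply: (mkdom (m := 4*k+2)); [lia | rewrite /sb1; lia | rewrite E; exact: e_v23].
- apply: (mkdom (m := 2)); [lia | rewrite /sb1 /pBC; lia | rewrite E; exact: e_vc].
Qed.

Lemma TD_b2 : nat_of_ord w = 4*k+1 ->
  is_TD (Fk k) [set~ w] [set u : 'I_(4*k+3) | sb2 k (val u)].
Proof.
move=> Hw; apply/andP; split.
  apply/subsetP => y; rewrite !inE /= => Hy; apply/negP => /eqP E.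
  have Ey : nat_of_ord y = 4*k+1 by rewrite E.
  move: Hy; rewrite /sb2 /pAB; lia.
apply/forallP => u; apply/implyP; rewrite !inE => Hu.
have [[i [Hi H]]|[E|[E|E]]] := classify (ltn_ord u).
- by apply: blockdom_AB Hi H => m; rewrite /sb2 => ->.
- apply: (mkdom (m := 0)); [lia | rewrite /sb2 /pAB; lia | rewrite E; exact: e_va].
- by rewrite (eqw E Hw) in Hu.
- apply: (mkdom (m := 2)); [lia | rewrite /sb2; lia | rewrite E; exact: e_vc].
Qed.

Lemma TD_b3 : nat_of_ord w = 4*k+2 ->
  is_TD (Fk k) [set~ w] [set u : 'I_(4*k+3) | sb3 k (val u)].
Proof.
move=> Hw; apply/andP; split.
  apply/subsetP => y; rewrite !inE /= => Hy; apply/negP => /eqP E.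
  have Ey : nat_of_ord y = 4*k+2 by rewrite E.
  move: Hy; rewrite /sb3 /pAB; lia.
apply/forallP => u; apply/implyP; rewrite !inE => Hu.
have [[i [Hi H]]|[E|[E|E]]] := classify (ltn_ord u).
- by apply: blockdom_AB Hi H => m; rewrite /sb3 => ->.
- apply: (mkdom (m := 0)); [lia | rewrite /sb3 /pAB; lia | rewrite E; exact: e_va].
- apply: (mkdom (m := 4*k)); [lia | rewrite /sb3; lia | rewrite E adjnC; exact: e_v12].
- by rewrite (eqw E Hw) in Hu.
Qed.

Lemma ATD_c1 : nat_of_ord w = 4*k ->
  is_ATD (Fk k) w [set u : 'I_(4*k+3) | pBC k (val u) || (val u == 4*k)].
Proof.
move=> Hw; apply/and3P; split.
- rewrite inE /= Hw; lia.
- apply/forallP => u; apply/implyP => Hu.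
  have [[i [Hi H]]|[E|[E|E]]] := classify (ltn_ord u).
  + by apply: (blockdom_BC (p := fun m => pBC k m || (m == 4*k))) Hi H => m ->.
  + by rewrite (eqw E Hw) in Hu.
  + apply: (mkdom (p := fun m => pBC k m || (m == 4*k)) (m := 4*k)); [lia | lia | rewrite E adjnC; exact: e_v12].
  + apply: (mkdom (p := fun m => pBC k m || (m == 4*k)) (m := 2)); [lia | rewrite /pBC; lia | rewrite E; exact: e_vc].
- apply/forallP => y; apply/implyP; rewrite inE /= => Hy; apply/negP => Ha.
  have Ha' : adjn k (nat_of_ord w) (nat_of_ord y) := Ha. rewrite Hw in Ha'.
  case: (nV1 hk Ha') => E; move: Hy; rewrite E /pBC; lia.
Qed.

Lemma ATD_c2 : nat_of_ord w = 4*k+1 ->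
  is_ATD (Fk k) w [set u : 'I_(4*k+3) | pAB k (val u) || (val u == 4*k+1)].
Proof.
move=> Hw; apply/and3P; split.
- rewrite inE /= Hw; lia.
- apply/forallP => u; apply/implyP => Hu.
  have [[i [Hi H]]|[E|[E|E]]] := classify (ltn_ord u).
  + by apply: (blockdom_AB (p := fun m => pAB k m || (m == 4*k+1))) Hi H => m ->.
  + apply: (mkdom (p := fun m => pAB k m || (m == 4*k+1)) (m := 0)); [lia | rewrite /pAB; lia | rewrite E; exact: e_va].
  + by rewrite (eqw E Hw) in Hu.
  + apply: (mkdom (p := fun m => pAB k m || (m == 4*k+1)) (m := 4*k+1)); [lia | lia | rewrite E adjnC; exact: e_v23].
- apply/forallP => y; apply/implyP; rewrite inE /= => Hy; apply/negP => Ha.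
  have Ha' : adjn k (nat_of_ord w) (nat_of_ord y) := Ha. rewrite Hw in Ha'.
  case: (nV2 hk Ha') => E; move: Hy; rewrite E /pAB; lia.
Qed.

Lemma ATD_c3 : nat_of_ord w = 4*k+2 ->
  is_ATD (Fk k) w [set u : 'I_(4*k+3) | pAB k (val u) || (val u == 4*k+2)].
Proof.
move=> Hw; apply/and3P; split.
- rewrite inE /= Hw; lia.
- apply/forallP => u; apply/implyP => Hu.
  have [[i [Hi H]]|[E|[E|E]]] := classify (ltn_ord u).
  + by apply: (blockdom_AB (p := fun m => pAB k m || (m == 4*k+2))) Hi H => m ->.
  + apply: (mkdom (p := fun m => pAB k m || (m == 4*k+2)) (m := 0)); [lia | rewrite /pAB; lia | rewrite E; exact: e_va].
  + apply: (mkdom (p := fun m => pAB k m || (m == 4*k+2)) (m := 4*k+2)); [lia | lia | rewrite E; exact: e_v23].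
  + by rewrite (eqw E Hw) in Hu.
- apply/forallP => y; apply/implyP; rewrite inE /= => Hy; apply/negP => Ha.
  have Ha' : adjn k (nat_of_ord w) (nat_of_ord y) := Ha. rewrite Hw in Ha'.
  case: (nV3 hk Ha') => E; move: Hy; rewrite E /pAB; lia.
Qed.
End Ups.


Lemma irr0 (y : 'I_(4*0+3)) : ~~ Fk 0 y y.
Proof. by case: y => [[|[|[|m]]] Hm]. Qed.

Lemma k0 : gamma_t (Fk 0) = 2.
Proof.
apply/eqP; rewrite eqn_leq; apply/andP; split.
- set S0 := [set u : 'I_(4*0+3) | (fun m => m < 2) (val u)].
  have C0 : #|S0| = 2 by rewrite /S0 (@card_p 0 (fun m => m < 2)) big_geq.
  have HS0 : is_TD (Fk 0) setT S0.
    apply/andP; split; first exact: subsetT.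
    apply/forallP => -[[|[|[|m]]] Hm]; rewrite in_setT //=.
    + apply/existsP; exists (Ordinal (isT : 1 < 4*0+3)); by rewrite inE.
    + apply/existsP; exists (Ordinal (isT : 0 < 4*0+3)); by rewrite inE.
    + apply/existsP; exists (Ordinal (isT : 1 < 4*0+3)); by rewrite inE.
  have := @bigmin_ub _ (is_TD (Fk 0) setT) (fun S : {set 'I_(4*0+3)} => #|S|)
            #|[set: 'I_(4*0+3)]| S0 HS0.
  by rewrite C0.
- apply: bigmin_lb; first by rewrite cardsT card_ord.
  move=> S /andP [_ /forallP H].
  have o0 : 'I_(4*0+3) := Ordinal (isT : 0 < 4*0+3).
  have [y /andP [yS Hy]] := existsP (implyP (H o0) (in_setT o0)).
  have [z /andP [zS Hz]] := existsP (implyP (H y) (in_setT y)).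
  have yz : y != z by apply: contraNneq (irr0 y) => E; rewrite {2}E.
  have sub : [set y; z] \subset S.
    by apply/subsetP => v; rewrite !inE => /orP [] /eqP ->.
  by have := subset_leq_card sub; rewrite cards2 yz.
Qed.


Theorem mainTheorem3 (k : nat) :
  gamma_t (Fk k) = ((4 * k + 3) + 1) %/ 2 /\
  (1 <= k -> forall w : 'I_(4 * k + 3),
     val w \in [:: vv1 k; vv2 k; vv3 k] ->
     gamma_t_on (Fk k) [set~ w] = ((4 * k + 3) - 1) %/ 2 /\
     gamma_ta (Fk k) w = ((4 * k + 3) - 1) %/ 2).
Proof.
case: (posnP k) => [-> | hk]; first by split; [rewrite k0 | ].
split.
  rewrite (_ : (4*k+3+1) %/ 2 = 2*k+2); last by lia.
  apply/eqP; rewrite eqn_leq; apply/andP; split.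
    have := @bigmin_ub _ (is_TD (Fk k) setT) (fun S => #|S|) #|[set: 'I_(4*k+3)]| _ (TD_a hk).
    by rewrite card_a => H; exact: H.
  apply: bigmin_lb; first by rewrite cardsT card_ord; lia.
  move=> S HS; exact: (lb_a hk HS).
move=> _ w; rewrite !inE => Hw3.
rewrite (_ : (4*k+3-1) %/ 2 = 2*k+1); last by lia.
have Hcd : #|[set~ w]| = 4*k+2 by rewrite cardsC1 card_ord; lia.
have HT : #|'I_(4*k+3)| = 4*k+3 by rewrite card_ord.
case/or3P: Hw3 => /eqP E.
- have Hw : nat_of_ord w = 4*k := E.
  split; apply/eqP; rewrite eqn_leq; apply/andP; split.
  + have := @bigmin_ub _ (is_TD (Fk k) [set~ w]) (fun S => #|S|) #|[set~ w]| _ (TD_b1 hk Hw).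
    by rewrite card_b1 => H; exact: H.
  + apply: bigmin_lb; first by rewrite Hcd; lia.
    move=> S HS; exact: (lb_b1 hk Hw HS).
  + have := @bigmin_ub _ (is_ATD (Fk k) w) (fun S => #|S|) #|'I_(4*k+3)| _ (ATD_c1 hk Hw).
    by rewrite card_c1 => H; exact: H.
  + apply: bigmin_lb; first by rewrite HT; lia.
    move=> S HS; exact: (lc_c1 hk Hw HS).
- have Hw : nat_of_ord w = 4*k+1 := E.
  split; apply/eqP; rewrite eqn_leq; apply/andP; split.
  + have := @bigmin_ub _ (is_TD (Fk k) [set~ w]) (fun S => #|S|) #|[set~ w]| _ (TD_b2 hk Hw).
    by rewrite (card_b2 hk) => H; exact: H.
  + apply: bigmin_lb; first by rewrite Hcd; lia.
    move=> S HS; exact: (lb_b2 hk Hw HS).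
  + have := @bigmin_ub _ (is_ATD (Fk k) w) (fun S => #|S|) #|'I_(4*k+3)| _ (ATD_c2 hk Hw).
    by rewrite card_c2 => H; exact: H.
  + apply: bigmin_lb; first by rewrite HT; lia.
    move=> S HS; exact: (lc_c2 hk Hw HS).
- have Hw : nat_of_ord w = 4*k+2 := E.
  split; apply/eqP; rewrite eqn_leq; apply/andP; split.
  + have := @bigmin_ub _ (is_TD (Fk k) [set~ w]) (fun S => #|S|) #|[set~ w]| _ (TD_b3 hk Hw).
    by rewrite card_b3 => H; exact: H.
  + apply: bigmin_lb; first by rewrite Hcd; lia.
    move=> S HS; exact: (lb_b3 hk Hw HS).
  + have := @bigmin_ub _ (is_ATD (Fk k) w) (fun S => #|S|) #|'I_(4*k+3)| _ (ATD_c3 hk Hw).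
    by rewrite card_c3 => H; exact: H.
  + apply: bigmin_lb; first by rewrite HT; lia.
    move=> S HS; exact: (lc_c3 hk Hw HS).
Qed.
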